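(* Let $\chi:T\to\overline{\mathbf F}_p^\times$ be a smooth character with $\chi\neq\chi^s$, and let $\pi'$ be a smooth representation of $G$. Then every non-zero $\phi\in\mathrm{Hom}_P(\mathrm{Ind}_P^G\chi,\pi')$ is injective.
   Context: $F$ non-Archimedean local field of residual characteristic $p$, $G=\mathrm{GL}_2(F)$, $P$ the upper triangular Borel subgroup, $U$ its unipotent radical, $T$ the diagonal torus; characters of $T$ are viewed as characters of $P$ via $P\to P/U\cong T$. $\chi^s(\mathrm{diag}(a,d))=\chi(\mathrm{diag}(d,a))$. $\mathrm{Ind}_P^G\chi$ is the space of locally constant $f:G\to\overline{\mathbf F}_p$ with $f(bg)=\chi(b)f(g)$ for $b\in P$, with $G$ acting by right translation. Representations are smooth on $\overline{\mathbf F}_p$-vector spaces. *)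

(* Defs.v *)
From HB Require Import structures.
From mathcomp Require Import all_boot all_order all_algebra.
Set Implicit Arguments. Unset Strict Implicit. Unset Printing Implicit Defensive.
Import Order.TTheory GRing.Theory Num.Theory.
Local Open Scope ring_scope.

(* Non-Archimedean local fields, presented via a normalized discrete    *)
(* valuation v : F^x -> Z (the value of v at 0 is irrelevant).          *)

(* x lies in the fractional ideal varpi^n O_F *)
Definition inPow (F : fieldType) (v : F -> int) (n : int) (x : F) : Prop :=
  x = 0 \/ n <= v x.

(* F is a non-Archimedean local field of residual characteristic p,
   with normalized discrete valuation v: v is a surjective valuation onto Z,
   F is complete for it, and the residue field O/m is finite of characteristic p. *)
Record nonarch_local_field (F : fieldType) (p : nat) (v : F -> int) : Prop := {
  nalf_prime : prime p;
  nalf_mul : forall x y, x != 0 -> y != 0 -> v (x * y) = v x + v y;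
  nalf_add : forall x y, x != 0 -> y != 0 -> x + y != 0 ->
                Num.min (v x) (v y) <= v (x + y);
  nalf_unif : exists w : F, w != 0 /\ v w = 1;
  nalf_complete : forall u : nat -> F,
      (forall N : nat, exists M : nat, forall m n : nat, (M <= m)%N -> (M <= n)%N ->
          inPow v N%:Z (u m - u n)) ->
      exists l : F, forall N : nat, exists M : nat, forall n : nat, (M <= n)%N ->
          inPow v N%:Z (u n - l);
  nalf_residue_finite : exists s : seq F, forall x : F, inPow v 0 x ->
      exists2 r, r \in s & inPow v 0 r /\ inPow v 1 (x - r);
  nalf_residue_char : inPow v 1 (p%:R : F)
}.

(* An algebraic closure of F_p: algebraically closed of characteristic p
   and algebraic over F_p (every element lies in a finite subfield). *)
Definition is_alg_closure_Fp (k : closedFieldType) (p : nat) : Prop :=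
  p \in [pchar k] /\ forall x : k, exists2 n : nat, (0 < n)%N & x ^+ (p ^ n) = x.

Definition GL2 (F : fieldType) := {M : 'M[F]_2 | M \in unitmx}.

Lemma GL2_mul_proof (F : fieldType) (g h : GL2 F) : val g *m val h \in unitmx.
Proof. by rewrite unitmx_mul (valP g) (valP h). Qed.

Definition GL2_mul (F : fieldType) (g h : GL2 F) : GL2 F :=
  exist _ (val g *m val h) (GL2_mul_proof g h).

Lemma GL2_one_proof (F : fieldType) : (1%:M : 'M[F]_2) \in unitmx.
Proof. exact: unitmx1. Qed.

Definition GL2_one (F : fieldType) : GL2 F := exist _ 1%:M (GL2_one_proof F).

Definition inBorel (F : fieldType) (b : GL2 F) : Prop := val b ord_max ord0 = 0.

(* principal congruence subgroup K_{n+1} = 1 + varpi^{n+1} M_2(O_F);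
   these form a basis of open neighbourhoods of 1 in G *)
Definition inCongr (F : fieldType) (v : F -> int) (n : nat) (h : GL2 F) : Prop :=
  forall i j : 'I_2, inPow v (n.+1)%:Z ((val h - 1%:M) i j).

Definition loc_const (F : fieldType) (v : F -> int) (T : Type) (f : GL2 F -> T) : Prop :=
  forall g, exists n : nat, forall h, inCongr v n h -> f (GL2_mul g h) = f g.

(* Smooth characters of T; chi a d := chi(diag(a,d)) for a,d in F^x     *)
Definition smooth_char (F : fieldType) (v : F -> int) (k : fieldType)
    (chi : F -> F -> k) : Prop :=
  [/\ forall a d, a != 0 -> d != 0 -> chi a d != 0,
      forall a d a' d', a != 0 -> d != 0 -> a' != 0 -> d' != 0 ->
          chi (a * a') (d * d') = chi a d * chi a' d' &
      exists n : nat, forall a d, a != 0 -> d != 0 ->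
          inPow v (n.+1)%:Z (a - 1) -> inPow v (n.+1)%:Z (d - 1) -> chi a d = 1].

(* chi <> chi^s, where chi^s(diag(a,d)) = chi(diag(d,a)) *)
Definition char_ne_swap (F : fieldType) (k : fieldType) (chi : F -> F -> k) : Prop :=
  exists a d, [/\ a != 0, d != 0 & chi a d != chi d a].

(* chi viewed as a character of P via P -> P/U = T *)
Definition charP (F : fieldType) (k : fieldType) (chi : F -> F -> k) (b : GL2 F) : k :=
  chi (val b ord0 ord0) (val b ord_max ord_max).

(* Ind_P^G chi as a subspace of functions G -> k *)
Definition in_Ind (F : fieldType) (v : F -> int) (k : fieldType) (chi : F -> F -> k)
    (f : GL2 F -> k) : Prop :=
  loc_const v f /\
  forall b g, inBorel b -> f (GL2_mul b g) = charP chi b * f g.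

Definition rtrans (F : fieldType) (k : Type) (g : GL2 F) (f : GL2 F -> k) : GL2 F -> k :=
  fun x => f (GL2_mul x g).

Definition smooth_rep (F : fieldType) (v : F -> int) (k : fieldType) (V : lmodType k)
    (rho : GL2 F -> V -> V) : Prop :=
  [/\ forall g (a : k) (x y : V), rho g (a *: x + y) = a *: rho g x + rho g y,
      forall x, rho (GL2_one F) x = x,
      forall g h x, rho (GL2_mul g h) x = rho g (rho h x) &
      forall x, exists n : nat, forall h, inCongr v n h -> rho h x = x].

(* phi in Hom_P(Ind_P^G chi, pi'): phi is a k-linear map defined on Ind_P^G chi
   (its values outside are irrelevant) commuting with the action of P *)
Definition is_HomP (F : fieldType) (v : F -> int) (k : fieldType) (chi : F -> F -> k)
    (V : lmodType k) (rho : GL2 F -> V -> V) (phi : (GL2 F -> k) -> V) : Prop :=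
  (forall (a : k) f1 f2, in_Ind v chi f1 -> in_Ind v chi f2 ->
      phi (fun x => a * f1 x + f2 x) = a *: phi f1 + phi f2) /\
  (forall b f, inBorel b -> in_Ind v chi f -> phi (rtrans b f) = rho b (phi f)).

(* Main.v *)
From Stdlib Require Import Classical ClassicalEpsilon FunctionalExtensionality.
Require Import Defs.
From HB Require Import structures.
From mathcomp Require Import all_boot all_order all_algebra.
From mathcomp Require Import zify ring lra.
Set Implicit Arguments. Unset Strict Implicit. Unset Printing Implicit Defensive.
Import Order.TTheory GRing.Theory Num.Theory.
Local Open Scope ring_scope.


Section Val.
Variables (p : nat) (F : fieldType) (v : F -> int).
Variable hF : nonarch_local_field p v.

Definition inB (i : int) (x : F) : bool := (x == 0) || (i <= v x).

Lemma inPowB i x : inPow v i x <-> inB i x.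
Proof.
rewrite /inPow /inB; split.
  by case=> [->|h]; rewrite ?eqxx // h orbT.
by case/orP=> [/eqP->|h]; [left|right].
Qed.

Lemma v1 : v 1 = 0.
Proof.
have := nalf_mul hF (oner_neq0 F) (oner_neq0 F). rewrite mulr1 => h. set a := v 1 in h *. lia.
Qed.

Lemma vN1 : v (-1) = 0.
Proof.
have h1 : (-1 : F) != 0 by rewrite oppr_eq0 oner_neq0.
have := nalf_mul hF h1 h1. rewrite mulrNN mulr1 v1 => h. lia.
Qed.

Lemma vN x : x != 0 -> v (- x) = v x.
Proof.
move=> hx. have h1 : (-1 : F) != 0 by rewrite oppr_eq0 oner_neq0.
by rewrite -mulN1r (nalf_mul hF h1 hx) vN1 add0r.
Qed.

Lemma vV x : x != 0 -> v (x^-1) = - v x.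
Proof.
move=> hx. have hx' : x^-1 != 0 by rewrite invr_eq0.
have := nalf_mul hF hx hx'. rewrite mulfV // v1 => h. lia.
Qed.

Lemma vM x y : x != 0 -> y != 0 -> v (x * y) = v x + v y.
Proof. by move=> hx hy; apply: (nalf_mul hF hx hy). Qed.

Lemma inB0 i : inB i 0.
Proof. by rewrite /inB eqxx. Qed.

Lemma inBD i x y : inB i x -> inB i y -> inB i (x + y).
Proof.
rewrite /inB. have [->|hx] := eqVneq x 0; first by rewrite add0r => _.
have [->|hy] := eqVneq y 0; first by rewrite addr0 => /= h _; rewrite h orbT.
move=> /= hi hj. case: eqP => //= /eqP hs.
have := nalf_add hF hx hy hs. move: hi hj; rewrite /Num.min.
case: ifP => _ h1 h2 h3; [exact: le_trans h1 h3|exact: le_trans h2 h3].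
Qed.

Lemma inBN i x : inB i x -> inB i (- x).
Proof.
rewrite /inB oppr_eq0. have [->|hx] //= := eqVneq x 0. by rewrite vN.
Qed.

Lemma inBB i x y : inB i x -> inB i y -> inB i (x - y).
Proof. by move=> ? ?; apply: inBD => //; apply: inBN. Qed.

Lemma inBM i j x y : inB i x -> inB j y -> inB (i + j) (x * y).
Proof.
rewrite /inB. have [->|hx] := eqVneq x 0; first by rewrite mul0r eqxx.
have [->|hy] := eqVneq y 0; first by rewrite mulr0 eqxx.
rewrite /= mulf_eq0 (negPf hx) (negPf hy) /= vM // => ? ?; lia.
Qed.

Lemma inB_le i j x : i <= j -> inB j x -> inB i x.
Proof. rewrite /inB => h /orP[->//|h2]; apply/orP; right; lia. Qed.

Lemma inBv x : inB (v x) x.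
Proof. by rewrite /inB lexx orbT. Qed.

Lemma inBabs x : inB (- `|v x|) x.
Proof. apply: inB_le (inBv x). lia. Qed.

Lemma inB_scale i d x : d != 0 -> inB (i + v d) (x * d) = inB i x.
Proof.
move=> hd. rewrite /inB mulf_eq0 (negPf hd) orbF.
have [->|hx] //= := eqVneq x 0. rewrite vM //. apply/idP/idP; lia.
Qed.

Lemma unif : exists w : F, w != 0 /\ v w = 1.
Proof. exact: nalf_unif hF. Qed.

Lemma ex_val (m : int) : exists d : F, d != 0 /\ v d = m.
Proof.
have [w [hw vw]] := unif.
have pw : forall n : nat, w ^+ n != 0 /\ v (w ^+ n) = n%:Z.
  elim=> [|n [h1 h2]]; first by rewrite expr0 oner_neq0 v1.
  rewrite exprS mulf_neq0 // vM // h2 vw; split=> //; lia.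
case: m => n.
  by exists (w ^+ n); have [? ?] := pw n.
have [h1 h2] := pw n.+1. exists ((w ^+ n.+1)^-1). rewrite invr_eq0 vV // h2.
split; first done. rewrite NegzE. lia.
Qed.

Lemma inB_val_neq0 (i : int) x : x != 0 -> ~~ inB i x -> v x < i.
Proof. rewrite /inB => /negPf -> /=; lia. Qed.

End Val.



Section Compact.
Variables (p : nat) (F : fieldType) (v : F -> int).
Variable hF : nonarch_local_field p v.

Local Notation inB := (inB v).

Lemma residue_cover (i : int) : exists L : seq F,
  (forall z, z \in L -> inB i z) /\ forall x, inB i x -> exists2 z, z \in L & inB (i + 1) (x - z).
Proof.
have [s hs] := nalf_residue_finite hF.
have [d [hd vd]] := ex_val hF i.
exists [seq d * r | r <- s & inB 0 r]; split.
  move=> z /mapP [r]; rewrite mem_filter => /andP [h1 _] ->.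
  by rewrite mulrC -[i]add0r -vd (inB_scale hF _ _ hd).
move=> x hx.
have hx' : inPow v 0 (x / d).
  by apply/inPowB; rewrite -(inB_scale hF _ _ hd) add0r vd mulrVK ?unitfE // inBv.
have [r hr [h1 h2]] := hs _ hx'.
exists (d * r); first by apply/mapP; exists r => //; rewrite mem_filter hr andbT; apply/inPowB.
move/inPowB: h2 => h2.
have -> : x - d * r = (x / d - r) * d by field.
have -> : i + 1 = 1 + v d by rewrite vd addrC.
by rewrite (inB_scale hF _ _ hd).
Qed.


Lemma list_max (L : seq F) (P : F -> int -> Prop) :
  (forall z m m', m <= m' -> P z m -> P z m') ->
  (forall z, z \in L -> exists m, P z m) -> exists m, forall z, z \in L -> P z m.
Proof.
move=> mono; elim: L => [|a L IH] h; first by exists 0.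
have [m1 h1] := h a (mem_head _ _).
have [m2 h2] : exists m, forall z, z \in L -> P z m.
  by apply: IH => z hz; apply: h; rewrite in_cons hz orbT.
exists (Num.max m1 m2) => z; rewrite in_cons => /orP [/eqP ->|hz].
  by apply: mono h1; rewrite le_max lexx.
by apply: mono (h2 _ hz); rewrite le_max lexx orbT.
Qed.

Section Cpt.
Variables (T : Type) (phi : F -> T).
Hypothesis hloc : forall x, exists n : int, forall y, inB n y -> phi (x + y) = phi x.

Definition good (a : F) (i : int) :=
  exists m : int, forall x y, inB i (x - a) -> inB m y -> phi (x + y) = phi x.

Lemma good_step a i : ~ good a i -> exists a', ~ good a' (i + 1) /\ inB i (a' - a).
Proof.
move=> hb. have [L [hL1 hL2]] := residue_cover i.
apply: NNPP => hn. apply: hb.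
have : forall z, z \in L -> good (a + z) (i + 1).
  move=> z hz; apply: NNPP => hg; apply: hn; exists (a + z); split=> //.
  by rewrite addrC addKr; apply: hL1.
move=> hg.
pose P := fun z m => forall x y, inB (i+1) (x - (a + z)) -> inB m y -> phi (x + y) = phi x.
have mono : forall z m m', m <= m' -> P z m -> P z m'.
  move=> z m0 m' hle h x y hx hy; apply: h hx _; exact: inB_le hle hy.
have [m hm] := list_max mono hg.
exists m => x y hx hy; have [z hz hz'] := hL2 _ hx.
apply: (hm z hz) hy. by rewrite opprD addrA.
Qed.


Lemma compact (j : int) : exists m : int, forall x y, inB j x -> inB m y -> phi (x + y) = phi x.
Proof.
apply: NNPP => hng.
have hb0 : ~ good 0 j.
  by case=> m hm; apply: hng; exists m => x y hx hy; apply: hm => //; rewrite subr0.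
pose nxt (n : nat) (a : F) := epsilon (inhabits (0 : F))
   (fun a' => ~ good a' (j + n%:Z + 1) /\ inB (j + n%:Z) (a' - a)).
pose u (n : nat) := iteri n nxt 0.
have uS n : u n.+1 = nxt n (u n) by [].
have hu : forall n, ~ good (u n) (j + n%:Z).
  elim=> [|n IH]; first by rewrite addr0.
  have [a' ha'] := good_step IH.
  have := epsilon_spec (inhabits (0 : F))
     (fun a' => ~ good a' (j + n%:Z + 1) /\ inB (j + n%:Z) (a' - u n)) (ex_intro _ a' ha').
  rewrite -/(nxt n (u n)) -uS => [[h _]].
  by have -> : j + n.+1%:Z = j + n%:Z + 1 by lia.
have hst : forall n, inB (j + n%:Z) (u n.+1 - u n).
  move=> n. have [a' ha'] := good_step (hu n).
  have := epsilon_spec (inhabits (0 : F))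
     (fun a' => ~ good a' (j + n%:Z + 1) /\ inB (j + n%:Z) (a' - u n)) (ex_intro _ a' ha').
  by rewrite -/(nxt n (u n)) -uS => [[_ h]].
have cau : forall n m, (n <= m)%N -> inB (j + n%:Z) (u m - u n).
  move=> n; elim=> [|m IH]; first by rewrite leqn0 => /eqP ->; rewrite subrr inB0.
  rewrite leq_eqVlt => /orP [/eqP <-|hlt]; first by rewrite subrr inB0.
  have -> : u m.+1 - u n = (u m.+1 - u m) + (u m - u n) by rewrite addrA subrK.
  apply: (inBD hF) => //; last by apply: IH.
  by apply: (inB_le _ (hst m)); lia.
have [l hl] : exists l : F, forall N : nat, exists M : nat, forall n : nat, (M <= n)%N ->
          inPow v N%:Z (u n - l).
  apply: (nalf_complete hF) => N; exists (absz (N%:Z - j)) => m n hm hn.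
  apply/inPowB. case: (leqP n m) => hnm.
    by apply: (inB_le _ (cau _ _ hnm)); lia.
  rewrite -opprB; apply: (inBN hF); apply: (inB_le _ (cau _ _ (ltnW hnm))); lia.
have [n0 hn0] := hloc l.
have [M hM] := hl (absz n0).
pose n := maxn M (absz (n0 - j)).
have h1 : inB n0 (u n - l).
  by apply: (inB_le _ ((inPowB _ _ _).1 (hM n (leq_maxl _ _)))) ; lia.
apply: (hu n); exists n0 => x y hx hy.
have hxl : inB n0 (x - l).
  have -> : x - l = (x - u n) + (u n - l) by rewrite addrA subrK.
  apply: (inBD hF) => //; apply: (inB_le _ hx).
  have : (absz (n0 - j) <= n)%N by apply: leq_maxr.
  lia.
have e1 : x + y = l + ((x - l) + y) by rewrite addrA [l + (x - l)]addrC subrK.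
have e2 : x = l + (x - l) by rewrite addrC subrK.
rewrite e1 hn0; last by apply: (inBD hF).
by rewrite {1}e2 hn0.
Qed.

End Cpt.

Fixpoint dd (i : int) (l : seq F) : seq F :=
  if l is r :: l' then r :: filter (fun r' => ~~ inB i (r' - r)) (dd i l') else [::].

Lemma inB_sym i x y : inB i (x - y) = inB i (y - x).
Proof.
by apply/idP/idP => h; rewrite -opprB; apply: (inBN hF).
Qed.

Lemma inB_trans i x y z : inB i (x - y) -> inB i (y - z) -> inB i (x - z).
Proof.
move=> h1 h2; have -> : x - z = (x - y) + (y - z) by rewrite addrA subrK.
exact: (inBD hF).
Qed.

Lemma dd_sub i l : forall z, z \in dd i l -> z \in l.
Proof.
elim: l => [//|r l IH] z /=; rewrite !in_cons => /orP [->//|].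
by rewrite mem_filter => /andP [_ /IH ->]; rewrite orbT.
Qed.

Lemma dd_count i l y : count (fun r => inB i (y - r)) (dd i l) = has (fun r => inB i (y - r)) l.
Proof.
elim: l => [//|r l IH] /=. rewrite count_filter.
case E : (inB i (y - r)) => /=.
  rewrite add1n; congr S; apply/eqP; rewrite -leqn0 leqNgt -has_count; apply/hasP.
  case=> r' _ /= /andP [h1 h2]; move/negP: h2; apply.
  by rewrite inB_sym in h1; apply: inB_trans h1 E.
rewrite add0n -IH; apply: eq_count => r' /=.
case h : (inB i (y - r')) => //=; apply/negP => h2; move/negP: E; apply.
exact: inB_trans h h2.
Qed.

Lemma reps (j : int) (k : nat) : exists L : seq F, (forall z, z \in L -> inB j z) /\
  forall x, inB j x -> count (fun z => inB (j + k%:Z) (x - z)) L = 1%N.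
Proof.
elim: k => [|k [L [hL1 hL2]]].
  exists [:: 0]; split; first by move=> z; rewrite inE => /eqP ->; apply: inB0.
  by move=> x hx /=; rewrite addr0 subr0 hx.
have [R [hR1 hR2]] := residue_cover (j + k%:Z).
pose R' := dd (j + k%:Z + 1) R.
exists (flatten [seq [seq z + r | r <- R'] | z <- L]); split.
  move=> z /flattenP [s /mapP [z0 hz0 ->] /mapP [r hr ->]].
  apply: (inBD hF); first by apply: hL1.
  by apply: (inB_le _ (hR1 _ (dd_sub hr))); lia.
move=> x hx. rewrite -(hL2 _ hx).
have -> : j + k.+1%:Z = j + k%:Z + 1 by lia.
elim: L {hL1 hL2} => [//|z L IH] /=.
rewrite count_cat IH; congr addn. rewrite count_map.
under eq_count => r do rewrite /= opprD addrA.
rewrite dd_count. case h : (inB (j + k%:Z) (x - z)) => /=.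
  have [r hr hr'] := hR2 _ h.
  by have -> : has (fun r0 : F => inB (j + k%:Z + 1) (x - z - r0)) R by apply/hasP; exists r.
have -> // : has (fun r0 : F => inB (j + k%:Z + 1) (x - z - r0)) R = false.
apply/hasP => -[r hr hr']; move/negP: h; apply.
have -> : x - z = (x - z - r) + r by rewrite subrK.
apply: (inBD hF); first by apply: (inB_le _ hr'); lia.
exact: hR1.
Qed.

End Compact.




Section Mx.
Variable F : fieldType.

Definition mx2 (a b c d : F) : 'M[F]_2 :=
  \matrix_(i, j) if i == ord0 then (if j == ord0 then a else b)
                 else (if j == ord0 then c else d).

Lemma ord2P (i : 'I_2) : i = ord0 \/ i = ord_max.
Proof. case: i => [[|[|//]] h]; [left|right]; exact: val_inj. Qed.

Lemma mx2_00 a b c d : mx2 a b c d ord0 ord0 = a. Proof. by rewrite mxE. Qed.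
Lemma mx2_01 a b c d : mx2 a b c d ord0 ord_max = b. Proof. by rewrite mxE. Qed.
Lemma mx2_10 a b c d : mx2 a b c d ord_max ord0 = c. Proof. by rewrite mxE. Qed.
Lemma mx2_11 a b c d : mx2 a b c d ord_max ord_max = d. Proof. by rewrite mxE. Qed.
Definition mx2E := (mx2_00, mx2_01, mx2_10, mx2_11).

Lemma mx2_ext (A B : 'M[F]_2) :
  A ord0 ord0 = B ord0 ord0 -> A ord0 ord_max = B ord0 ord_max ->
  A ord_max ord0 = B ord_max ord0 -> A ord_max ord_max = B ord_max ord_max -> A = B.
Proof.
move=> h1 h2 h3 h4; apply/matrixP => i j.
by case: (ord2P i) => ->; case: (ord2P j) => ->.
Qed.

Lemma mx2_eta (M : 'M[F]_2) :
  M = mx2 (M ord0 ord0) (M ord0 ord_max) (M ord_max ord0) (M ord_max ord_max).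
Proof. by apply: mx2_ext; rewrite mx2E. Qed.

Lemma sum2 (f : 'I_2 -> F) : \sum_(i < 2) f i = f ord0 + f ord_max.
Proof. by rewrite !big_ord_recl big_ord0 addr0; congr (_ + f _); apply: val_inj. Qed.

Lemma mx2_mul a b c d a' b' c' d' :
  mx2 a b c d *m mx2 a' b' c' d' =
  mx2 (a * a' + b * c') (a * b' + b * d') (c * a' + d * c') (c * b' + d * d').
Proof. by apply: mx2_ext; rewrite !mxE sum2 !mx2E. Qed.

Lemma mx2_1 : (1%:M : 'M[F]_2) = mx2 1 0 0 1.
Proof. by apply: mx2_ext; rewrite mx2E !mxE. Qed.

Lemma mx2_sub a b c d a' b' c' d' :
  mx2 a b c d - mx2 a' b' c' d' = mx2 (a - a') (b - b') (c - c') (d - d').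
Proof. by apply: mx2_ext; rewrite !mxE. Qed.

Lemma mx2_unit a b c d : a * d - b * c != 0 -> mx2 a b c d \in unitmx.
Proof.
move=> h. set D := a * d - b * c.
have : mx2 a b c d *m mx2 (d / D) (- b / D) (- c / D) (a / D) = 1%:M.
  rewrite mx2_mul mx2_1; congr mx2; rewrite /D; field; done.
by case/mulmx1_unit.
Qed.

Definition gl (M : 'M[F]_2) : GL2 F := insubd (GL2_one F) M.

Lemma glK M : M \in unitmx -> val (gl M) = M.
Proof. by move=> h; rewrite /gl insubdK. Qed.

Lemma GL2_eq (g h : GL2 F) : val g = val h -> g = h.
Proof. exact: val_inj. Qed.

Lemma GL2_mulA (g h l : GL2 F) : GL2_mul g (GL2_mul h l) = GL2_mul (GL2_mul g h) l.
Proof. by apply: GL2_eq; rewrite /= mulmxA. Qed.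

Lemma GL2_mul1 (g : GL2 F) : GL2_mul (GL2_one F) g = g.
Proof. by apply: GL2_eq; rewrite /= mul1mx. Qed.

Lemma GL2_mulg1 (g : GL2 F) : GL2_mul g (GL2_one F) = g.
Proof. by apply: GL2_eq; rewrite /= mulmx1. Qed.

Definition GL2_inv (g : GL2 F) : GL2 F := gl (invmx (val g)).

Lemma GL2_invK (g : GL2 F) : val (GL2_inv g) = invmx (val g).
Proof. by rewrite glK // unitmx_inv (valP g). Qed.

Lemma GL2_mulV (g : GL2 F) : GL2_mul g (GL2_inv g) = GL2_one F.
Proof. by apply: GL2_eq; rewrite /= GL2_invK mulmxV // (valP g). Qed.

Lemma GL2_mulVg (g : GL2 F) : GL2_mul (GL2_inv g) g = GL2_one F.
Proof. by apply: GL2_eq; rewrite /= GL2_invK mulVmx // (valP g). Qed.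

Lemma val_one : val (GL2_one F) = mx2 1 0 0 1.
Proof. by rewrite /= mx2_1. Qed.

End Mx.



Section Elts.
Variable F : fieldType.

Definition nn (y : F) := gl (mx2 1 y 0 1).
Definition lo (c : F) := gl (mx2 1 0 c 1).
Definition tor (a d : F) := gl (mx2 a 0 0 d).
Definition wn (x : F) := gl (mx2 0 1 1 x).
Definition ws := gl (mx2 (0 : F) 1 (-1) 0).
Definition pp (a b d : F) := gl (mx2 a b 0 d).

Lemma val_nn y : val (nn y) = mx2 1 y 0 1.
Proof. by rewrite glK // mx2_unit // mulr1 mulr0 subr0 oner_neq0. Qed.
Lemma val_lo c : val (lo c) = mx2 1 0 c 1.
Proof. by rewrite glK // mx2_unit // mulr1 mul0r subr0 oner_neq0. Qed.
Lemma val_tor a d : a != 0 -> d != 0 -> val (tor a d) = mx2 a 0 0 d.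
Proof. by move=> ha hd; rewrite glK // mx2_unit // mul0r subr0 mulf_neq0. Qed.
Lemma val_wn x : val (wn x) = mx2 0 1 1 x.
Proof. by rewrite glK // mx2_unit // mul0r mulr1 sub0r oppr_eq0 oner_neq0. Qed.
Lemma val_ws : val ws = mx2 0 1 (-1) 0.
Proof. by rewrite glK // mx2_unit // mul0r mulrN1 sub0r opprK oner_neq0. Qed.
Lemma val_pp a b d : a != 0 -> d != 0 -> val (pp a b d) = mx2 a b 0 d.
Proof. by move=> ha hd; rewrite glK // mx2_unit // mulr0 subr0 mulf_neq0. Qed.

Lemma det_neq0 (g : GL2 F) :
  val g ord0 ord0 * val g ord_max ord_max - val g ord0 ord_max * val g ord_max ord0 != 0.
Proof.
set M := val g. have hu : M \in unitmx := valP g.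
have := mulmxV hu. rewrite [M in M *m _]mx2_eta [invmx M]mx2_eta mx2_mul mx2_1.
set a := M ord0 ord0; set b := M ord0 ord_max; set c := M ord_max ord0;
set d := M ord_max ord_max.
set a' := invmx M ord0 ord0; set b' := invmx M ord0 ord_max;
set c' := invmx M ord_max ord0; set d' := invmx M ord_max ord_max.
move/matrixP=> E.
have h1 : a * a' + b * c' = 1 by have := E ord0 ord0; rewrite !mx2E.
have h2 : a * b' + b * d' = 0 by have := E ord0 ord_max; rewrite !mx2E.
have h3 : c * a' + d * c' = 0 by have := E ord_max ord0; rewrite !mx2E.
have h4 : c * b' + d * d' = 1 by have := E ord_max ord_max; rewrite !mx2E.
have H : (a * d - b * c) * (a' * d' - b' * c') =
   (a * a' + b * c') * (c * b' + d * d') - (a * b' + b * d') * (c * a' + d * c') by ring.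
rewrite h1 h2 h3 h4 mulr0 subr0 mulr1 in H.
apply/eqP => H0. by rewrite H0 mul0r in H; move/eqP: H; rewrite eq_sym oner_eq0.
Qed.

Lemma bruhat (g : GL2 F) : val g ord_max ord0 != 0 ->
  let M := val g in let c := M ord_max ord0 in
  let D := M ord0 ord0 * M ord_max ord_max - M ord0 ord_max * c in
  g = GL2_mul (pp (- D / c) (M ord0 ord0) c) (wn (M ord_max ord_max / c)).
Proof.
move=> hc M c D. have hD : D != 0 := det_neq0 g.
apply: GL2_eq. rewrite /= val_pp ?val_wn //; last by rewrite mulf_neq0 ?oppr_eq0 ?invr_eq0.
rewrite mx2_mul {1}[val g]mx2_eta. rewrite -/M -/c.
congr mx2; rewrite /D; field; done.
Qed.

Lemma wn_nn x y : GL2_mul (wn x) (nn y) = wn (x + y).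
Proof. apply: GL2_eq; rewrite /= val_wn val_nn val_wn mx2_mul; congr mx2; ring. Qed.

Lemma wn_tor x a d : a != 0 -> d != 0 ->
  GL2_mul (wn x) (tor a d) = GL2_mul (tor d a) (wn (x * d / a)).
Proof.
move=> ha hd; apply: GL2_eq; rewrite /= val_wn val_tor // val_tor // val_wn !mx2_mul.
congr mx2; field; done.
Qed.

Lemma tor_lo_tor a d c : a != 0 -> d != 0 ->
  GL2_mul (GL2_mul (tor a d) (lo c)) (tor a^-1 d^-1) = lo (d * c / a).
Proof.
move=> ha hd; apply: GL2_eq; rewrite /= val_lo val_tor // val_tor ?invr_eq0 // !mx2_mul.
rewrite val_lo; congr mx2; field; done.
Qed.

Lemma ws_dec : ws = GL2_mul (GL2_mul (nn 1) (lo (-1))) (nn 1).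
Proof. apply: GL2_eq; rewrite /= val_ws !val_nn val_lo !mx2_mul; congr mx2; ring. Qed.

Lemma ws_tor a d : a != 0 -> d != 0 -> GL2_mul ws (tor a d) = GL2_mul (tor d a) ws.
Proof.
move=> ha hd; apply: GL2_eq; rewrite /= val_ws !val_tor // !mx2_mul; congr mx2; ring.
Qed.

Lemma wn_inf x : x != 0 -> wn x = GL2_mul (pp (- x^-1) 1 x) (lo x^-1).
Proof.
move=> hx; apply: GL2_eq; rewrite /= val_wn val_pp ?oppr_eq0 ?invr_eq0 // val_lo mx2_mul.
congr mx2; field; done.
Qed.

Lemma tor_inv a d : a != 0 -> d != 0 -> GL2_mul (tor a d) (tor a^-1 d^-1) = GL2_one F.
Proof.
move=> ha hd; apply: GL2_eq; rewrite /= !val_tor ?invr_eq0 // mx2_mul mx2_1.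
congr mx2; field; done.
Qed.

Lemma wn0_mul x : GL2_mul (wn 0) (nn x) = wn x.
Proof. by rewrite wn_nn add0r. Qed.

Lemma borel_pp a b d : a != 0 -> d != 0 -> inBorel (pp a b d).
Proof. by move=> ha hd; rewrite /inBorel val_pp // mx2E. Qed.
Lemma borel_tor a d : a != 0 -> d != 0 -> inBorel (tor a d).
Proof. by move=> ha hd; rewrite /inBorel val_tor // mx2E. Qed.
Lemma borel_nn y : inBorel (nn y).
Proof. by rewrite /inBorel val_nn mx2E. Qed.

End Elts.



Section Dlt.
Variable k : fieldType.

Definition dlt (a : nat -> k) : nat -> k := fun i => a i.+1 - a i.

Lemma dlt_iter n : forall a i, iter n dlt a i =
  \sum_(0 <= j < n.+1) ((-1) ^+ (n + j) * 'C(n, j)%:R) * a (i + j)%N.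
Proof.
elim: n => [|n IH] a i.
  by rewrite big_nat1 /= expr0 mul1r mul1r addn0.
rewrite iterSr IH /dlt.
rewrite (big_nat_recl n.+1) // bin0 mulr1 addn0.
under eq_bigr => j _ do rewrite binS natrD mulrDr mulrDl.
rewrite big_split /=.
pose X j := (-1 : k) ^+ (n + j) * 'C(n, j.+1)%:R * a (i + j.+1)%N.
pose Y j := (-1 : k) ^+ (n + j) * 'C(n, j)%:R * a (i + j.+1)%N.
have e1 : \sum_(0 <= j < n.+1) (-1) ^+ (n + j) * 'C(n, j)%:R * (a (i + j).+1 - a (i + j)%N) =
   \sum_(0 <= j < n.+1) Y j - \sum_(0 <= j < n.+1) (-1) ^+ (n + j) * 'C(n, j)%:R * a (i + j)%N.
  rewrite -sumrB; apply: eq_bigr => j _; rewrite /Y addnS; ring.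
have e2 : \sum_(0 <= j < n.+1) (-1) ^+ (n + j) * 'C(n, j)%:R * a (i + j)%N =
   (-1) ^+ n * a i - \sum_(0 <= j < n) X j.
  rewrite big_nat_recl // bin0 addn0 addn0 mulr1 -sumrN; congr (_ + _).
  apply: eq_bigr => j _; rewrite /X addnS exprS; ring.
have e3 : \sum_(0 <= j < n.+1) (-1) ^+ (n.+1 + j.+1) * 'C(n, j.+1)%:R * a (i + j.+1)%N =
   \sum_(0 <= j < n) X j.
  rewrite big_nat_recr //= bin_small // mulr0 mul0r addr0.
  apply: eq_bigr => j _; rewrite /X addSn addnS !exprS; ring.
have e4 : \sum_(0 <= j < n.+1) (-1) ^+ (n.+1 + j.+1) * 'C(n, j)%:R * a (i + j.+1)%N =
   \sum_(0 <= j < n.+1) Y j.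
  apply: eq_bigr => j _; rewrite /Y addSn addnS !exprS; ring.
rewrite e1 e2 e3 e4 addn0 exprS; ring.
Qed.


Lemma dlt_p (p : nat) : p \in [pchar k] -> forall a, a p = a 0%N -> iter p dlt a 0%N = 0.
Proof.
move=> hp a ha. have pp := pcharf_prime hp.
rewrite dlt_iter.
case: p hp pp ha => [//|p'] hp pp ha.
rewrite big_nat_recl // big_nat_recr //=.
rewrite big1_seq; last first.
  move=> j; rewrite mem_index_iota => /andP [_ hj].
  by rewrite bin_lt_pcharf_0 ?mulr0 ?mul0r // ltnS hj.
rewrite add0r bin0 binn !mulr1 add0n addn0 -ha.
have -> : ((-1 : k) ^+ (p'.+1 + p'.+1)) = 1 by rewrite exprD -expr2 sqrr_sign.
case: (even_prime pp) => [e|o].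
  rewrite e expr2 mulrNN mulr1 mul1r -mulr2n -mulr_natl.
  by have := pcharf0 hp; rewrite e => ->; rewrite mul0r.
by rewrite -signr_odd o expr1 mulN1r mul1r addNr.
Qed.

End Dlt.



Section Main.
Variables (p : nat) (F : fieldType) (v : F -> int) (hF : nonarch_local_field p v)
 (k : closedFieldType) (hk : is_alg_closure_Fp k p)
 (chi : F -> F -> k) (hchi : smooth_char v chi) (hs : char_ne_swap chi)
 (V : lmodType k) (rho : GL2 F -> V -> V) (hrho : smooth_rep v rho)
 (phi : (GL2 F -> k) -> V) (hphi : is_HomP v chi rho phi).

Local Notation inB := (inB v).
Local Notation Ind := (in_Ind v chi).
Local Notation one := (GL2_one F).

Lemma chi_neq0 a d : a != 0 -> d != 0 -> chi a d != 0.
Proof. by case: hchi => h _ _; apply: h. Qed.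

Lemma chi_mul a d a' d' : a != 0 -> d != 0 -> a' != 0 -> d' != 0 ->
  chi (a * a') (d * d') = chi a d * chi a' d'.
Proof. by case: hchi => _ h _; apply: h. Qed.

Lemma chi11 : chi 1 1 = 1.
Proof.
have h1 := oner_neq0 F.
have := chi_mul h1 h1 h1 h1. rewrite mulr1 => h.
apply: (mulfI (chi_neq0 h1 h1)). by rewrite -h mulr1.
Qed.

Lemma chi_inv a d : a != 0 -> d != 0 -> chi a d * chi a^-1 d^-1 = 1.
Proof.
move=> ha hd. rewrite -chi_mul ?invr_eq0 // !mulfV //. exact: chi11.
Qed.

Lemma charP_pp a b d : a != 0 -> d != 0 -> charP chi (pp a b d) = chi a d.
Proof. by move=> ha hd; rewrite /charP val_pp // !mx2E. Qed.
Lemma charP_tor a d : a != 0 -> d != 0 -> charP chi (tor a d) = chi a d.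
Proof. by move=> ha hd; rewrite /charP val_tor // !mx2E. Qed.
Lemma charP_nn y : charP chi (nn y) = 1.
Proof. by rewrite /charP val_nn !mx2E chi11. Qed.

Lemma rho_lin g a x y : rho g (a *: x + y) = a *: rho g x + rho g y.
Proof. by case: hrho => h _ _ _; apply: h. Qed.
Lemma rho0 g : rho g 0 = 0.
Proof.
have := rho_lin g 1 0 0. rewrite !scale1r addr0 => h.
have h2 : rho g 0 + rho g 0 = rho g 0 + 0 by rewrite addr0 -h.
exact: addrI h2.
Qed.
Lemma rhoZ g a x : rho g (a *: x) = a *: rho g x.
Proof. by have := rho_lin g a x 0; rewrite !addr0 rho0 addr0. Qed.
Lemma rhoM g h x : rho (GL2_mul g h) x = rho g (rho h x).
Proof. by case: hrho => _ _ h' _; apply: h'. Qed.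

Lemma inCongrP n h : inCongr v n h <-> forall i j, inB (n.+1)%:Z ((val h - 1%:M) i j).
Proof. by split=> H i j; apply/inPowB; apply: H. Qed.

Lemma inCongr_le m n h : (m <= n)%N -> inCongr v n h -> inCongr v m h.
Proof.
move=> hmn /inCongrP H; apply/inCongrP => i j; apply: (inB_le _ (H i j)); lia.
Qed.

Lemma inCongr_lo n c : inB (n.+1)%:Z c -> inCongr v n (lo c).
Proof.
move=> hc; apply/inCongrP => i j; rewrite val_lo mx2_1 mx2_sub.
by case: (ord2P i) => ->; case: (ord2P j) => ->; rewrite !mx2E ?subrr ?subr0 ?inB0.
Qed.

Lemma inCongr_nn n c : inB (n.+1)%:Z c -> inCongr v n (nn c).
Proof.
move=> hc; apply/inCongrP => i j; rewrite val_nn mx2_1 mx2_sub.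
by case: (ord2P i) => ->; case: (ord2P j) => ->; rewrite !mx2E ?subrr ?subr0 ?inB0.
Qed.

Lemma mbound (M : 'M[F]_2) : exists E : nat, forall i j, inB (- E%:Z) (M i j).
Proof.
exists (absz (v (M ord0 ord0)) + absz (v (M ord0 ord_max)) + absz (v (M ord_max ord0))
   + absz (v (M ord_max ord_max)))%N => i j.
by case: (ord2P i) => ->; case: (ord2P j) => ->; apply: (inB_le _ (inBv _ _)); lia.
Qed.

Lemma mul_bound e1 e2 (A B : 'M[F]_2) : (forall i j, inB e1 (A i j)) ->
  (forall i j, inB e2 (B i j)) -> forall i j, inB (e1 + e2) ((A *m B) i j).
Proof.
move=> hA hB i j; rewrite mxE sum2.
by apply: (inBD hF); apply: (inBM hF).
Qed.

Lemma conj_small (g : GL2 F) (n : nat) : exists m : nat, forall h, inCongr v m h ->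
  inCongr v n (GL2_mul (GL2_mul (GL2_inv g) h) g).
Proof.
have [E1 h1] := mbound (invmx (val g)). have [E2 h2] := mbound (val g).
exists (n + E1 + E2)%N => h /inCongrP hh; apply/inCongrP => i j.
have -> : val (GL2_mul (GL2_mul (GL2_inv g) h) g) - 1%:M =
    invmx (val g) *m (val h - 1%:M) *m val g.
  rewrite /= GL2_invK mulmxBr mulmxBl mulmx1 mulVmx //; exact: valP g.
apply: (inB_le _ (mul_bound (mul_bound h1 hh) h2 i j)). lia.
Qed.

Lemma Ind_b f b : Ind f -> inBorel b -> f b = charP chi b * f one.
Proof. by case=> _ H hb; rewrite -H // GL2_mulg1. Qed.

Definition comb (a : k) (f1 f2 : GL2 F -> k) : GL2 F -> k := fun x => a * f1 x + f2 x.

Lemma Ind_comb a f1 f2 : Ind f1 -> Ind f2 -> Ind (comb a f1 f2).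
Proof.
case=> l1 e1 [l2 e2]; split.
  move=> g; have [n1 h1] := l1 g; have [n2 h2] := l2 g.
  exists (maxn n1 n2) => h hh; rewrite /comb h1 ?h2 //.
    by apply: inCongr_le hh; apply: leq_maxr.
  by apply: inCongr_le hh; apply: leq_maxl.
by move=> b g hb; rewrite /comb e1 // e2 //; ring.
Qed.

Lemma Ind_rtrans g f : Ind f -> Ind (rtrans g f).
Proof.
case=> l1 e1; split.
  move=> x; have [n hn] := l1 (GL2_mul x g). have [m hm] := conj_small g n.
  exists m => h hh; rewrite /rtrans -(hn _ (hm _ hh)); congr f.
  apply: GL2_eq; rewrite /= GL2_invK !mulmxA mulmxK //; exact: valP g.
by move=> b y hb; rewrite /rtrans -GL2_mulA e1.
Qed.

Lemma Ind0 : Ind (fun _ => 0).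
Proof.
split; first by move=> g; exists 0%N.
by move=> b g _; rewrite mulr0.
Qed.


Lemma Ind_bruhat_zero f : Ind f -> f one = 0 -> (forall x, f (wn x) = 0) -> forall g, f g = 0.
Proof.
move=> hf h1 hw g. have [hc|hc] := eqVneq (val g ord_max ord0) 0.
  by rewrite (Ind_b hf) // h1 mulr0.
move: (bruhat hc) => /= ->. case: hf => _ e; rewrite e ?hw ?mulr0 //.
apply: borel_pp => //. rewrite mulf_neq0 ?oppr_eq0 ?invr_eq0 //. exact: det_neq0.
Qed.

Lemma Ind_inf f : Ind f -> exists N : nat, forall x, x != 0 -> inB (N.+1)%:Z x^-1 ->
  f (wn x) = chi (- x^-1) x * f one.
Proof.
case=> l e. have [N hN] := l one. exists N => x hx hi.
rewrite (wn_inf hx) e; last by apply: borel_pp; rewrite ?oppr_eq0 ?invr_eq0.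
rewrite charP_pp ?oppr_eq0 ?invr_eq0 //; congr (_ * _).
by rewrite -{1}(GL2_mul1 (lo x^-1)) hN //; apply: inCongr_lo.
Qed.

Lemma Ind_wnloc f : Ind f -> forall x, exists n : int, forall y, inB n y -> f (wn (x + y)) = f (wn x).
Proof.
case=> l _ x. have [n hn] := l (wn x). exists (n.+1)%:Z => y hy.
by rewrite -wn_nn hn //; apply: inCongr_nn.
Qed.

Lemma Ind_unif f : Ind f -> f one = 0 -> exists j m : int, [/\ j <= m,
  (forall x, ~~ inB j x -> f (wn x) = 0) & forall x y, inB m y -> f (wn (x + y)) = f (wn x)].
Proof.
move=> hf h1. have [N hN] := Ind_inf hf.
pose j := - (N.+1)%:Z.
have supp : forall x, ~~ inB j x -> f (wn x) = 0.
  move=> x hx. have x0 : x != 0 by apply: contra hx => /eqP ->; apply: inB0.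
  have := inB_val_neq0 x0 hx => hv.
  rewrite hN ?h1 ?mulr0 //. rewrite /inB (vV hF) // invr_eq0 (negPf x0) /=. lia.
have [m0 hm0] := compact hF (T := k) (phi := fun x => f (wn x)) (Ind_wnloc hf) j.
exists j, (Num.max m0 j); split => //; first by rewrite le_max lexx orbT.
move=> x y hy. case hj : (inB j x).
  apply: hm0 => //; apply: (inB_le _ hy); by rewrite le_max lexx.
rewrite !supp ?hj //. apply/negP => hxy; move/negP: hj; apply.
have -> : x = (x + y) - y by rewrite addrK.
apply: (inBB hF) => //; apply: (inB_le _ hy); by rewrite le_max lexx orbT.
Qed.

Definition Kp f := Ind f /\ phi f = 0.

Lemma phi_comb a f1 f2 : Ind f1 -> Ind f2 -> phi (comb a f1 f2) = a *: phi f1 + phi f2.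
Proof. by move=> h1 h2; case: hphi => H _; apply: H. Qed.

Lemma phi_rtrans b f : inBorel b -> Ind f -> phi (rtrans b f) = rho b (phi f).
Proof. by move=> h1 h2; case: hphi => _ H; apply: H. Qed.

Lemma Kp_comb a f1 f2 : Kp f1 -> Kp f2 -> Kp (comb a f1 f2).
Proof.
case=> h1 e1 [h2 e2]; split; first exact: Ind_comb.
by rewrite phi_comb // e1 e2 scaler0 addr0.
Qed.

Lemma Kp_rtrans b f : inBorel b -> Kp f -> Kp (rtrans b f).
Proof.
move=> hb [h1 e1]; split; first exact: Ind_rtrans.
by rewrite phi_rtrans // e1 rho0.
Qed.

Lemma phi0 : phi (fun _ => 0) = 0.
Proof.
have := phi_comb 1 Ind0 Ind0.
have -> : comb 1 (fun _ : GL2 F => 0) (fun _ => 0) = (fun _ => 0 : k).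
  by apply: functional_extensionality => x; rewrite /comb mulr0 addr0.
rewrite scale1r => h.
have h2 : phi (fun _ => 0) + phi (fun _ => 0) = phi (fun _ => 0) + 0 by rewrite addr0 -h.
exact: addrI h2.
Qed.

Lemma Kp0 : Kp (fun _ => 0).
Proof. by split; [exact: Ind0|exact: phi0]. Qed.

Definition Dop (u : F) (g : GL2 F -> k) := comb (-1) g (rtrans (nn u) g).

Lemma Dop_wn u g x : Dop u g (wn x) = g (wn (x + u)) - g (wn x).
Proof. by rewrite /Dop /comb /rtrans wn_nn; ring. Qed.

Lemma Dop_one u g : Ind g -> g one = 0 -> Dop u g one = 0.
Proof.
move=> hg h1; rewrite /Dop /comb /rtrans GL2_mul1 (Ind_b hg (borel_nn u)) h1; ring.
Qed.

Definition Gd0 (j m : int) g := [/\ Kp g, g one = 0,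
  (forall x, ~~ inB j x -> g (wn x) = 0) & forall x y, inB m y -> g (wn (x + y)) = g (wn x)].

Lemma Gd0_D j m u g : inB j u -> Gd0 j m g -> Gd0 j m (Dop u g).
Proof.
move=> hu [hK h1 hs' hi]; split.
- by apply: Kp_comb => //; apply: Kp_rtrans => //; apply: borel_nn.
- by apply: Dop_one => //; case: hK.
- move=> x hx; rewrite Dop_wn (hs' x hx).
  have hxu : ~~ inB j (x + u).
    apply/negP => h; move/negP: hx; apply.
    have -> : x = (x + u) - u by rewrite addrK.
    exact: (inBB hF).
  by rewrite hs' // subrr.
- by move=> x y hy; rewrite !Dop_wn -addrA [y + u]addrC addrA (hi (x + u) y hy) (hi x y hy).
Qed.


Definition Dk (n : nat) (u : F) g := iter n (Dop u) g.

Lemma Dk_wn n u g x : forall i, Dk n u g (wn (x + u *+ i)) =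
  iter n (@dlt k) (fun j => g (wn (x + u *+ j))) i.
Proof.
elim: n => [//|n IH] i.
rewrite /Dk iterS -/(Dk n u g) Dop_wn iterS /dlt -IH -IH.
by rewrite -addrA -mulrSr.
Qed.

Lemma Dk_p j m u g : inB m u -> Gd0 j (m + 1) g -> forall x, Dk p u g (wn x) = 0.
Proof.
move=> hu [_ _ _ hi] x.
have := Dk_wn p u g x 0. rewrite mulr0n addr0 => ->.
apply: dlt_p; first by case: hk.
rewrite mulr0n addr0 hi //.
rewrite -mulr_natl. have := nalf_residue_char hF => /inPowB h.
by rewrite addrC; apply: (inBM hF).
Qed.

Definition Gd j m g := Gd0 j m g /\ exists x, g (wn x) != 0.

Lemma last_true (P : nat -> Prop) N : P 0%N -> ~ P N -> exists n, P n /\ ~ P n.+1.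
Proof.
move=> h0; elim: N => [//|N IH] hN.
case: (classic (P N)) => hP; first by exists N.
exact: IH.
Qed.

Lemma step_u j m u (Q : (GL2 F -> k) -> Prop) g : inB j u -> inB m u ->
  (forall g, Gd0 j (m + 1) g -> Q g -> Q (Dop u g)) -> Gd j (m + 1) g -> Q g ->
  exists g', [/\ Gd j (m + 1) g', Q g' & forall x, g' (wn (x + u)) = g' (wn x)].
Proof.
move=> hju hmu hQ [hg hnz] hq.
have hall : forall n, Gd0 j (m + 1) (Dk n u g) /\ Q (Dk n u g).
  elim=> [//|n [IH1 IH2]]; rewrite /Dk iterS -/(Dk n u g); split.
    exact: Gd0_D.
  exact: hQ.
have hp : ~ exists x, Dk p u g (wn x) != 0.
  by case=> x; rewrite (Dk_p hmu hg) ?eqxx.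
have [n [h1 h2]] := last_true (P := fun n => exists x, Dk n u g (wn x) != 0) hnz hp.
exists (Dk n u g); split.
- by split=> //; case: (hall n).
- by case: (hall n).
- move=> x; apply/eqP; rewrite -subr_eq0 -Dop_wn; apply/eqP.
  apply: NNPP => hne; apply: h2; exists x.
  by rewrite /Dk iterS; apply/eqP.
Qed.

Lemma descend j m g : j <= m -> Gd j (m + 1) g -> exists g', Gd j m g'.
Proof.
move=> hjm hg. have [R [hR1 hR2]] := residue_cover hF m.
have H : forall l : seq F, (forall r, r \in l -> r \in R) -> exists g',
    Gd j (m + 1) g' /\ forall r, r \in l -> forall x, g' (wn (x + r)) = g' (wn x).
  elim=> [|r l IH] hl; first by exists g.
  have hl' : forall r', r' \in l -> r' \in R by move=> r' hr'; apply: hl; rewrite in_cons hr' orbT.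
  have [g1 [hg1 hq1]] := IH hl'.
  have hr : inB m r by apply: hR1; apply: hl; apply: mem_head.
  pose Q := fun g : GL2 F -> k => forall r, r \in l -> forall x, g (wn (x + r)) = g (wn x).
  have hQ : forall g, Gd0 j (m + 1) g -> Q g -> Q (Dop r g).
    move=> g0 _ hq r0 hr0 x; rewrite !Dop_wn -addrA [r0 + r]addrC addrA.
    by rewrite (hq r0 hr0 (x + r)) (hq r0 hr0 x).
  have [g2 [hg2 hq2 hr2]] := step_u (inB_le hjm hr) hr hQ hg1 hq1.
  exists g2; split=> // r' ; rewrite in_cons => /orP [/eqP ->//|]; exact: hq2.
have [g' [[[hK h1 hs' hi] hnz] hq]] := H R (fun r h => h).
exists g'; split=> //; split=> // x y hy.
have [r hr hr'] := hR2 _ hy.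
have -> : x + y = (x + r) + (y - r) by ring.
by rewrite (hi (x + r) (y - r) hr') (hq r hr x).
Qed.

Lemma descend_all j (n : nat) g : Gd j (j + n%:Z) g -> exists g', Gd j j g'.
Proof.
elim: n g => [g hg|n IH g hg].
  by exists g; rewrite addr0 in hg.
have e : j + n.+1%:Z = (j + n%:Z) + 1 by lia.
rewrite e in hg. have hle : j <= j + n%:Z by lia.
have [g' hg'] := descend hle hg.
exact: IH hg'.
Qed.

Lemma ball_elt h : Kp h -> h one = 0 -> (exists g, h g != 0) -> exists (j : int) e c,
  [/\ Kp e, e one = 0, c != 0 & forall x, e (wn x) = if inB j x then c else 0].
Proof.
move=> hK h1 [g0 hg0].
have hI : Ind h by case: hK.
have [j [m [hjm supp inv]]] := Ind_unif hI h1.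
have hnz : exists x, h (wn x) != 0.
  apply: NNPP => hn; move/negP: hg0; apply; apply/eqP.
  apply: (Ind_bruhat_zero hI h1) => x; apply/eqP; apply: NNPP => hx; apply: hn.
  by exists x; apply/negP.
have hm : m = j + (absz (m - j))%:Z by lia.
rewrite hm in inv.
have [g [[hKg hg1 hsg hig] [x0 hx0]]] := descend_all (g := h) (j := j) (n := absz (m - j)) (conj (And4 hK h1 supp inv) hnz).
exists j, g, (g (wn 0)).
have val : forall x, g (wn x) = if inB j x then g (wn 0) else 0.
  move=> x; case hx : (inB j x); last by rewrite hsg ?hx.
  by rewrite -[x]add0r hig.
split=> //. by move: hx0; rewrite (val x0); case: ifP => _ //; rewrite eqxx.
Qed.

Lemma A1 h : Kp h -> (exists g, h g != 0) -> exists h', [/\ Kp h', h' one = 0 & exists g, h' g != 0].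
Proof.
move=> hK hnz. have hI : Ind h by case: hK.
have [h1|h1] := eqVneq (h one) 0; first by exists h.
case: (classic (exists b, inBorel b /\ exists g, comb (- charP chi b) h (rtrans b h) g != 0)).
  case=> b [hb hg]; exists (comb (- charP chi b) h (rtrans b h)); split=> //.
    by apply: Kp_comb => //; apply: Kp_rtrans.
  by rewrite /comb /rtrans GL2_mul1 (Ind_b hI hb); ring.
move=> hn. have H : forall b, inBorel b -> forall g, h (GL2_mul g b) = charP chi b * h g.
  move=> b hb g; apply/eqP; rewrite -subr_eq0; apply/eqP; apply: NNPP => hne; apply: hn.
  exists b; split=> //; exists g; rewrite /comb /rtrans; apply/eqP => he; apply: hne.
  by rewrite addrC mulNr in he.
have [a [d [ha hd hne]]] := hs.
have hw0 : h (wn 0) = 0.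
  have e1 := H _ (borel_tor ha hd) (wn 0).
  rewrite wn_tor // mul0r mul0r in e1.
  have e2 : h (GL2_mul (tor d a) (wn 0)) = chi d a * h (wn 0).
    case: hI => _ eqv; rewrite eqv; last exact: borel_tor.
    by rewrite charP_tor.
  rewrite e2 charP_tor // in e1.
  have : (chi a d - chi d a) * h (wn 0) = 0 by rewrite mulrBl e1 subrr.
  by move/eqP; rewrite mulf_eq0 subr_eq0 (negPf hne) /= => /eqP.
have hw : forall x, h (wn x) = 0.
  by move=> x; rewrite -wn0_mul H; [rewrite hw0 mulr0 | exact: borel_nn].
have [N hN] := Ind_inf hI.
have [d0 [hd0 vd0]] := ex_val hF (N.+1)%:Z.
have hd0B : inB (N.+1)%:Z d0 by rewrite /inB vd0 lexx orbT.
have := hN d0^-1. rewrite invrK hw invr_eq0 => /(_ hd0 hd0B) /esym /eqP.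
rewrite mulf_eq0 (negPf h1) orbF.
have hcn : chi (- d0) d0^-1 != 0 by apply: chi_neq0; rewrite ?oppr_eq0 ?invr_eq0.
by rewrite (negPf hcn).
Qed.

Lemma ball_any (j : int) e c (l : int) z : Kp e -> e one = 0 -> c != 0 ->
  (forall x, e (wn x) = if inB j x then c else 0) ->
  exists e', [/\ Kp e', e' one = 0 & forall x, e' (wn x) = if inB l (x - z) then 1 else 0].
Proof.
move=> hK h1 hc hv.
have hI : Ind e by case: hK.
have [d [hd vd]] := ex_val hF (j - l).
have h10 : (1 : F) != 0 := oner_neq0 F.
pose e1 := rtrans (tor 1 d) e.
have hK1 : Kp e1 by apply: Kp_rtrans => //; apply: borel_tor.
have v1 : forall x, e1 (wn x) = chi d 1 * (if inB l x then c else 0).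
  move=> x; rewrite /e1 /rtrans wn_tor //.
  case: hI => _ eqv; rewrite eqv; last exact: borel_tor.
  rewrite charP_tor // hv divr1. congr (_ * _).
  have -> : j = l + v d by rewrite vd; lia.
  by rewrite (inB_scale hF _ _ hd).
have o1 : e1 one = 0.
  by rewrite /e1 /rtrans GL2_mul1 (Ind_b hI (borel_tor h10 hd)) h1 mulr0.
have hcd : c * chi d 1 != 0 by rewrite mulf_neq0 // chi_neq0.
pose e2 := comb (c * chi d 1)^-1 e1 (fun _ => 0).
have hK2 : Kp e2 by apply: Kp_comb => //; apply: Kp0.
have hI2 : Ind e2 by case: hK2.
pose e3 := rtrans (nn (- z)) e2.
exists e3; split.
- by apply: Kp_rtrans => //; apply: borel_nn.
- by rewrite /e3 /rtrans GL2_mul1 (Ind_b hI2 (borel_nn _)) /e2 /comb o1 mulr0 addr0 mulr0.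
- move=> x; rewrite /e3 /rtrans wn_nn /e2 /comb v1 addr0.
  case: ifP => _; last by rewrite !mulr0.
  by rewrite [chi d 1 * c]mulrC mulVf.
Qed.

Lemma sum_if (L : seq F) (P : pred F) (c : k) :
  \sum_(z <- L) (if P z then c else 0) = c *+ count P L.
Proof.
elim: L => [|a L IH]; first by rewrite big_nil.
rewrite big_cons IH /= mulrnDr; case: (P a) => //=; by rewrite add0r.
Qed.

Lemma fill (Hball : forall (l : int) z, exists e', [/\ Kp e', e' one = 0 &
    forall x, e' (wn x) = if inB l (x - z) then 1 else 0]) f :
  Ind f -> f one = 0 -> Kp f.
Proof.
move=> hI h1. have [j [m [hjm supp inv]]] := Ind_unif hI h1.
pose n := absz (m - j). pose l := j + n%:Z.
have hml : m <= l by rewrite /l /n; lia.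
have [L [hL1 hL2]] := reps hF j n.
have H : forall L' : seq F, exists g, [/\ Kp g, g one = 0 & forall x,
    g (wn x) = \sum_(z <- L') (if inB l (x - z) then f (wn z) else 0)].
  elim=> [|z L' [g [hg1 hg2 hg3]]].
    by exists (fun _ => 0); split=> //; [exact: Kp0 | move=> x; rewrite big_nil].
  have [e [he1 he2 he3]] := Hball l z.
  exists (comb (f (wn z)) e g); split.
  - exact: Kp_comb.
  - by rewrite /comb he2 hg2 mulr0 addr0.
  - move=> x; rewrite /comb he3 hg3 big_cons; congr (_ + _).
    by case: ifP; rewrite ?mulr1 ?mulr0.
have [g [hg1 hg2 hg3]] := H L.
have hIg : Ind g by case: hg1.
have eqw : forall x, g (wn x) = f (wn x).
  move=> x; rewrite hg3. case hx : (inB j x).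
    rewrite (eq_bigr (fun z => if inB l (x - z) then f (wn x) else 0)).
      by rewrite sum_if hL2 // mulr1n.
    move=> z _; case: ifP => // hz.
    have -> : z = x + (z - x) by rewrite addrC subrK.
    rewrite inv //; apply: (inB_le hml). by rewrite (inB_sym hF).
  rewrite (supp x) ?hx //; apply: big1_seq => z /andP [_ hz].
  case: ifP => // hxz. suff : inB j x by rewrite hx.
  have -> : x = (x - z) + z by rewrite subrK.
  apply: (inBD hF); last exact: hL1.
  by apply: (inB_le _ hxz); rewrite /l; lia.
have hfg : forall y, comb (-1) g f y = 0.
  apply: Ind_bruhat_zero.
  - exact: Ind_comb.
  - by rewrite /comb hg2 h1; ring.
  - by move=> x; rewrite /comb eqw; ring.
have -> : f = g.
  apply: functional_extensionality => y; have := hfg y; rewrite /comb => /eqP.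
  by rewrite mulN1r addrC subr_eq0 => /eqP.
exact: hg1.
Qed.

Lemma stepB (HS : forall f, Ind f -> f one = 0 -> phi f = 0)
  (hnz : exists2 f, Ind f & phi f != 0) : False.
Proof.
case: hnz => f0 hI0 hn0.
have h10 : f0 one != 0.
  by apply: contra hn0 => /eqP h; rewrite HS.
pose v0 := phi f0.
have eig : forall b, inBorel b -> rho b v0 = charP chi b *: v0.
  move=> b hb.
  have hc : Ind (comb (- charP chi b) f0 (rtrans b f0)).
    by apply: Ind_comb => //; apply: Ind_rtrans.
  have hc1 : comb (- charP chi b) f0 (rtrans b f0) one = 0.
    by rewrite /comb /rtrans GL2_mul1 (Ind_b hI0 hb); ring.
  have := HS _ hc hc1. rewrite phi_comb //; last by apply: Ind_rtrans.
  by rewrite phi_rtrans // => /eqP; rewrite scaleNr addrC subr_eq0 => /eqP.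
have [n hn] : exists n : nat, forall h, inCongr v n h -> rho h v0 = v0.
  by case: hrho => _ _ _ H; apply: H.
have [c0 [hc0 vc0]] := ex_val hF (n.+1)%:Z.
have hlo : rho (lo c0) v0 = v0.
  by apply: hn; apply: inCongr_lo; rewrite /inB vc0 lexx orbT.
have h10F : (1 : F) != 0 := oner_neq0 F.
pose d := - c0^-1.
have hd : d != 0 by rewrite oppr_eq0 invr_eq0.
have hlm : rho (lo (-1)) v0 = v0.
  have e : lo (-1) = GL2_mul (GL2_mul (tor 1 d) (lo c0)) (tor 1^-1 d^-1).
    by rewrite tor_lo_tor //; congr lo; rewrite /d; field; rewrite oner_neq0 hc0.
  rewrite e !rhoM eig; last by apply: borel_tor; rewrite ?invr_eq0.
  rewrite rhoZ hlo rhoZ eig; last exact: borel_tor.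
  rewrite scalerA charP_tor ?invr_eq0 // charP_tor // mulrC chi_inv //.
  by rewrite scale1r.
have hnn : rho (nn 1) v0 = v0.
  by rewrite eig; [rewrite charP_nn scale1r | exact: borel_nn].
have hws : rho (ws F) v0 = v0 by rewrite ws_dec !rhoM hnn hlm hnn.
have [a [d' [ha hd' hne]]] := hs.
have := congr1 (fun g => rho g v0) (ws_tor ha hd'); rewrite /= !rhoM.
rewrite eig; last exact: borel_tor.
rewrite rhoZ hws eig; last exact: borel_tor.
rewrite !charP_tor // => /eqP; rewrite -subr_eq0 -scalerBl scaler_eq0 subr_eq0 (negPf hne) /=.
by apply/negP.
Qed.

Lemma main_sec (hnz : exists2 f, Ind f & phi f != 0) :
  forall f1 f2, Ind f1 -> Ind f2 -> phi f1 = phi f2 -> f1 = f2.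
Proof.
move=> f1 f2 h1 h2 e. apply: functional_extensionality => g.
pose h := comb (-1) f2 f1.
have hK : Kp h.
  split; first exact: Ind_comb.
  by rewrite phi_comb // e scaleN1r addNr.
apply: NNPP => hne.
have hz : exists g, h g != 0.
  exists g; rewrite /h /comb mulN1r addrC subr_eq0; exact/eqP.
have [h' [hK' h'1 hz']] := A1 hK hz.
have [j [e0 [c [he1 he2 hc he3]]]] := ball_elt hK' h'1 hz'.
have Hball := fun l z => ball_any l z he1 he2 hc he3.
apply: (stepB _ hnz) => f hf hf1.
by case: (fill Hball hf hf1).
Qed.

End Main.

Theorem corollary5p2 (p : nat) (F : fieldType) (v : F -> int)
    (hF : nonarch_local_field p v)
    (k : closedFieldType) (hk : is_alg_closure_Fp k p)
    (chi : F -> F -> k) (hchi : smooth_char v chi) (hs : char_ne_swap chi)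
    (V : lmodType k) (rho : GL2 F -> V -> V) (hrho : smooth_rep v rho)
    (phi : (GL2 F -> k) -> V) (hphi : is_HomP v chi rho phi)
    (hnz : exists2 f, in_Ind v chi f & phi f != 0) :
  forall f1 f2, in_Ind v chi f1 -> in_Ind v chi f2 -> phi f1 = phi f2 -> f1 = f2.
Proof.
move=> f1 f2 h1 h2 e.
exact: (main_sec hF hk hchi hs hrho hphi hnz h1 h2 e).
Qed.
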